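(* Let $x\in\operatorname{dom}f$ and assume $\inf_{t\in T}f_t(x)>-\infty$. Under (SH), for every $\varepsilon>0$, \[ \mathrm{N}_{\operatorname{dom}f}(x)=\Big[\overline{\operatorname{co}}\Big(\bigcup_{t\in T}\partial_\varepsilon f_t(x)\Big)\Big]_\infty . \]
   Context: $X$ is a real separated locally convex space with dual $X^*$ carrying the weak$^*$ topology. $T$ is a nonempty index set, $\{f_t: t\in T\}$ are proper convex lsc functions $X\to\mathbb{R}\cup\{+\infty\}$, $f:=\sup_{t\in T}f_t$. $\partial_\varepsilon g(x)=\{x^*:\ g(y)\ge g(x)+\langle x^*,y-x\rangle-\varepsilon\ \forall y\}$ if $g(x)\in\mathbb{R}$ (empty otherwise). $\overline{\operatorname{co}}$ is the weak$^*$-closed convex hull; $C_\infty$ is the recession cone of a nonempty closed convex set $C$; $\mathrm{N}_A(x)$ is the normal cone. (SH): $T$ is compact Hausdorff and $t\mapsto f_t(z)$ is upper semicontinuous on $T$ for each $z\in X$. *)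

(* Defs.v *)
From HB Require Import structures.
From mathcomp Require Import all_boot all_order all_algebra.
From mathcomp Require Import all_classical all_reals.
From mathcomp Require Import topology normedtype tvs ereal.
Set Implicit Arguments.
Unset Strict Implicit.
Unset Printing Implicit Defensive.
Import Order.TTheory GRing.Theory Num.Theory.
Import numFieldTopology.Exports numFieldNormedType.Exports.
Local Open Scope classical_set_scope.
Local Open Scope ring_scope.

(* The topological dual
   X^* is represented as the set of continuous linear functionals X -> R;
   subsets of X^* are subsets of (X -> R) contained in [dual_elem]. *)

Section Defs.
Context {R : realType} {X : tvsType R}.

Definition dual_elem (phi : X -> R) : Prop :=
  (forall (a : R) (u v : X), phi (a *: u + v) = a * phi u + phi v)
  /\ continuous phi.

(* closedness in X^* for the weak* topology sigma(X^*, X): a subset C of X^*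
   is weak*-closed iff its complement in X^* is weak*-open, i.e. every point
   of X^* \ C has a basic weak* neighbourhood (finitely many points of X,
   radius e > 0) disjoint from C *)
Definition wstar_closed (C : set (X -> R)) : Prop :=
  forall phi, dual_elem phi -> ~ C phi ->
    exists (s : seq X) (e : R), 0 < e /\
      forall psi, dual_elem psi ->
        (forall z, z \in s -> `|psi z - phi z| < e) -> ~ C psi.

Definition dual_convex (C : set (X -> R)) : Prop :=
  forall phi psi (l : R), C phi -> C psi -> 0 <= l <= 1 ->
    C (fun z => l * phi z + (1 - l) * psi z).

Definition wstar_clco (A : set (X -> R)) : set (X -> R) :=
  [set phi | dual_elem phi /\
    forall C, C `<=` dual_elem -> wstar_closed C -> dual_convex C ->
      A `<=` C -> C phi].

Definition rec_cone (C : set (X -> R)) : set (X -> R) :=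
  [set d | dual_elem d /\
    forall c, C c -> forall l : R, 0 <= l -> C (fun z => c z + l * d z)].

Definition normal_cone (A : set X) (x : X) : set (X -> R) :=
  [set phi | dual_elem phi /\ forall y, A y -> phi (y - x) <= 0].

Local Open Scope ereal_scope.

(* epsilon-subdifferential; empty when g x is not finite *)
Definition eps_subdiff (g : X -> \bar R) (eps : R) (x : X) : set (X -> R) :=
  [set phi | dual_elem phi /\ exists r : R, g x = r%:E /\
     forall y, ((r + phi (y - x) - eps)%R)%:E <= g y].

Definition proper_fun (g : X -> \bar R) : Prop :=
  (forall y, g y != -oo) /\ exists y, g y < +oo.

Definition convex_efun (g : X -> \bar R) : Prop :=
  forall (x y : X) (l : R), (0 <= l <= 1)%R ->
    g (l *: x + (1 - l) *: y)%R <= l%:E * g x + (1 - l)%:E * g y.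

Definition edom (g : X -> \bar R) : set X := [set y | g y < +oo].

Definition sup_fun {T : Type} (ft : T -> X -> \bar R) : X -> \bar R :=
  fun y => ereal_sup (range (fun t => ft t y)).

End Defs.

Definition upper_semicontinuous {T : topologicalType} {R : numFieldType}
  (g : T -> \bar R) : Prop :=
  forall t (a : R), (g t < a%:E)%E ->
    exists2 V, nbhs t V & forall s, V s -> (g s < a%:E)%E.

(* Main.v *)
Require Import Defs.
From HB Require Import structures.
From mathcomp Require Import all_boot all_order all_algebra.
From mathcomp Require Import all_classical all_reals.
From mathcomp Require Import topology normedtype tvs ereal convex.
From mathcomp Require Import ring lra.
Import Order.TTheory GRing.Theory Num.Theory.
Import numFieldTopology.Exports numFieldNormedType.Exports.
Local Open Scope classical_set_scope.
Local Open Scope ring_scope.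

Section Generic.
Variables (R : realType) (V : lmodType R).

Definition linf (f : V -> R) := forall (a : R) (u v : V), f (a *: u + v) = a * f u + f v.

Lemma linf0 f : linf f -> f 0 = 0.
Proof. move=> lf; have := lf 1 0 0; rewrite scale1r addr0 mul1r => h; lra. Qed.

Lemma linfZ f a u : linf f -> f (a *: u) = a * f u.
Proof. move=> lf; by rewrite -[a *: u]addr0 lf linf0 // addr0. Qed.

Lemma linfD f u v : linf f -> f (u + v) = f u + f v.
Proof. move=> lf; by rewrite -[u]scale1r lf mul1r scale1r. Qed.

Lemma linfN f u : linf f -> f (- u) = - f u.
Proof. move=> lf; by rewrite -scaleN1r linfZ // mulN1r. Qed.

Lemma linfB f u v : linf f -> f (u - v) = f u - f v.
Proof. move=> lf; by rewrite linfD // linfN. Qed.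

Lemma linf_sum f (n : nat) (a : 'I_n -> R) (w : 'I_n -> V) : linf f ->
  f (\sum_(i < n) a i *: w i) = \sum_(i < n) a i * f (w i).
Proof.
move=> lf; elim/big_rec2: _ => [|i y1 y2 _ IH]; first exact: linf0.
by rewrite lf IH.
Qed.

Definition sublin (q : V -> R) :=
  (forall u v, q (u + v) <= q u + q v) /\ (forall l u, 0 < l -> q (l *: u) <= l * q u).

Lemma sublin0 q : sublin q -> q 0 = 0.
Proof.
move=> [qD qZ]; have h1 := qD 0 0; rewrite addr0 in h1.
have h2 := qZ (2^-1) 0; rewrite scaler0 in h2.
have : q 0 <= 2^-1 * q 0 by apply: h2; rewrite invr_gt0; lra.
move=> h3; apply/eqP; rewrite eq_le; apply/andP; split; lra.
Qed.

Lemma sublinZ q l u : sublin q -> 0 <= l -> q (l *: u) = l * q u.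
Proof.
move=> sq; rewrite le_eqVlt => /orP[/eqP <-|l0].
  by rewrite scale0r mul0r sublin0.
apply/eqP; rewrite eq_le; apply/andP; split; first exact: sq.2.
have := sq.2 (l^-1) (l *: u); rewrite invr_gt0 => /(_ l0).
rewrite scalerA mulVf ?gt_eqF // scale1r => h.
have : l * q u <= l * (l^-1 * q (l *: u)) by rewrite ler_pM2l.
by rewrite mulrA mulfV ?gt_eqF // mul1r.
Qed.

Lemma sublinN q u : sublin q -> - q (- u) <= q u.
Proof.
move=> sq; have := sq.1 u (- u); rewrite subrr sublin0 // => h; lra.
Qed.

Lemma inf_le_elt {S : set R} {x} : has_lbound S -> S x -> inf S <= x.
Proof. by move=> hb Sx; apply: ge_inf. Qed.

Lemma inf_leP (S : set R) c : has_lbound S ->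
  (forall e, 0 < e -> exists2 x, S x & x <= c + e) -> inf S <= c.
Proof.
move=> hb h; rewrite leNgt; apply/negP => ci.
have [|x Sx xle] := h ((inf S - c) / 2); first by rewrite divr_gt0 // subr_gt0.
have := ge_inf hb Sx; lra.
Qed.

Lemma le_infP (S : set R) c : S !=set0 -> (forall x, S x -> c <= x) -> c <= inf S.
Proof. by move=> ne h; apply: lb_le_inf. Qed.

Definition Opq (q : V -> R) (u : V) (v : V) : R :=
  inf [set y | exists2 t, 0 <= t & y = q (v + t *: u) - t * q u].

Section OpSec.
Variables (q : V -> R) (u : V).
Hypothesis sq : sublin q.

Let Sv v := [set y | exists2 t, 0 <= t & y = q (v + t *: u) - t * q u].

Let Sv_lb v : has_lbound (Sv v).
Proof.
exists (- q (- v)) => y [t t0 ->].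
have := sq.1 (v + t *: u) (- v).
rewrite addrC addKr sublinZ // => h; lra.
Qed.

Let Sv_elt v t : 0 <= t -> Sv v (q (v + t *: u) - t * q u).
Proof. by move=> t0; exists t. Qed.

Let Sv_inf v : has_inf (Sv v).
Proof. by split; [exists (q (v + 0 *: u) - 0 * q u); exists 0|exact: Sv_lb]. Qed.

Lemma Opq_le v : Opq q u v <= q v.
Proof.
have := inf_le_elt (Sv_lb v) (@Sv_elt v 0 (lexx 0)).
by rewrite scale0r addr0 mul0r subr0.
Qed.

Lemma Opq_N : Opq q u (- u) <= - q u.
Proof.
have := inf_le_elt (Sv_lb (- u)) (@Sv_elt (- u) 1 ler01).
by rewrite scale1r addNr sublin0 // mul1r sub0r.
Qed.

Lemma Opq_sublin : sublin (Opq q u).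
Proof.
split.
- move=> v1 v2; apply: inf_leP; first exact: Sv_lb.
  move=> e e0.
  have e2 : 0 < e / 2 by rewrite divr_gt0.
  have [y1 [t1 t10 ->] h1] := @inf_adherent _ (Sv v1) (e/2) e2 (Sv_inf v1).
  have [y2 [t2 t20 ->] h2] := @inf_adherent _ (Sv v2) (e/2) e2 (Sv_inf v2).
  exists (q (v1 + v2 + (t1 + t2) *: u) - (t1 + t2) * q u).
    by exists (t1 + t2) => //; rewrite addr_ge0.
  have := sq.1 (v1 + t1 *: u) (v2 + t2 *: u).
  rewrite (_ : v1 + t1 *: u + (v2 + t2 *: u) = v1 + v2 + (t1 + t2) *: u); last first.
    by rewrite scalerDl addrACA.
  rewrite /Opq -/(Sv v1) -/(Sv v2); lra.
- move=> l v l0; apply: inf_leP; first exact: Sv_lb.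
  move=> e e0.
  have el : 0 < e / l by rewrite divr_gt0.
  have [y1 [t1 t10 ->] h1] := @inf_adherent _ (Sv v) (e / l) el (Sv_inf v).
  exists (q (l *: v + (l * t1) *: u) - (l * t1) * q u).
    by exists (l * t1) => //; rewrite mulr_ge0 // ltW.
  rewrite -scalerA -scalerDr sublinZ ?ltW //.
  rewrite /Opq -/(Sv v) in h1.
  have : l * (q (v + t1 *: u) - t1 * q u) < l * (inf (Sv v) + e / l).
    by rewrite ltr_pM2l.
  have key : l * (e / l) = e by rewrite mulrCA mulfV ?gt_eqF // mulr1.
  rewrite mulrBr mulrDr key mulrA /Opq -/(Sv v).
  move=> h; lra.
Qed.

End OpSec.

Theorem hahn_banach (mu : V -> R) (p0 : V) : sublin mu ->
  exists f, linf f /\ (forall v, f v <= mu v) /\ mu p0 <= f p0.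
Proof.
move=> smu.
pose mu0 := Opq mu p0.
have smu0 : sublin mu0 by apply: Opq_sublin.
pose Tq := {q : V -> R | sublin q /\ forall v, q v <= mu0 v}.
pose Rq (s t : Tq) := `[< forall v, sval t v <= sval s v >].
have t0 : Tq by exists mu0; split => //.
have [t premax] : exists t, premaximal Rq t.
  apply: (ZL_preorder t0).
  - by move=> t; apply/asboolP => v.
  - move=> r s t /asboolP h1 /asboolP h2; apply/asboolP => v.
    exact: le_trans (h2 v) (h1 v).
  - move=> A Atot.
    have [[a Aa]|A0] := pselect (exists a, A a); last first.
      by exists t0 => s As; exfalso; apply: A0; exists s.
    pose Sa v := [set y | exists2 s, A s & y = sval s v].
    have Sa_lb v : has_lbound (Sa v).
      exists (- mu0 (- v)) => y [s As ->].
      have := sublinN (sval s) v (proj1 (svalP s)).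
      have := (proj2 (svalP s)) (- v); lra.
    have Sa_ne v : Sa v !=set0 by exists (sval a v); exists a.
    pose qi v := inf (Sa v).
    have qi_le s v : A s -> qi v <= sval s v.
      by move=> As; apply: inf_le_elt => //; exists s.
    have sqi : sublin qi.
      split.
      - move=> v1 v2; apply: inf_leP => // e e0.
        have e2 : 0 < e / 2 by rewrite divr_gt0.
        have [y1 [s1 As1 ->] h1] := @inf_adherent _ (Sa v1) (e/2) e2 (conj (Sa_ne v1) (Sa_lb v1)).
        have [y2 [s2 As2 ->] h2] := @inf_adherent _ (Sa v2) (e/2) e2 (conj (Sa_ne v2) (Sa_lb v2)).
        have [/asboolP hle|/asboolP hle] := Atot s1 s2 As1 As2.
        + exists (sval s2 (v1 + v2)); first by exists s2.
          have := (proj1 (proj1 (svalP s2))) v1 v2; have := hle v1.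
          rewrite /qi in h1 h2; lra.
        + exists (sval s1 (v1 + v2)); first by exists s1.
          have := (proj1 (proj1 (svalP s1))) v1 v2; have := hle v2.
          rewrite /qi in h1 h2; lra.
      - move=> l v l0; apply: inf_leP => // e e0.
        have el : 0 < e / l by rewrite divr_gt0.
        have [y1 [s1 As1 ->] h1] := @inf_adherent _ (Sa v) (e / l) el (conj (Sa_ne v) (Sa_lb v)).
        exists (sval s1 (l *: v)); first by exists s1.
        have := (proj2 (proj1 (svalP s1))) l v l0.
        have : l * sval s1 v <= l * (inf (Sa v) + e / l) by rewrite ler_pM2l // ltW.
        have key : l * (e / l) = e by rewrite mulrCA mulfV ?gt_eqF // mulr1.
        rewrite mulrDr key /qi; lra.
    have qimu : forall v, qi v <= mu0 v.
      by move=> v; apply: le_trans (qi_le a v Aa) _; apply: (proj2 (svalP a)).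
    exists (exist _ qi (conj sqi qimu)) => s As; apply/asboolP => v /=.
    exact: qi_le.
  move: t premax => [q [sq qmu]] premax.
  have qN : forall u, q (- u) = - q u.
    move=> u.
    have hOp : sublin (Opq q u) /\ forall v, Opq q u v <= mu0 v.
      split; first exact: Opq_sublin.
      by move=> v; apply: le_trans (@Opq_le q u sq v) (qmu v).
    have := premax (exist _ (Opq q u) hOp).
    rewrite /Rq /= => /(_ (asboolT (fun v => @Opq_le q u sq v))) /asboolP /(_ (- u)).
    move=> h; have := @Opq_N q u sq; have := sublinN q u sq.
    move=> h1 h2; apply/eqP; rewrite eq_le; apply/andP; split; lra.
  have lq : linf q.
    move=> a u v.
    have qD : forall u v, q (u + v) = q u + q v.
      move=> u1 u2; apply/eqP; rewrite eq_le; apply/andP; split; first exact: sq.1.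
      have := sq.1 (- u1) (- u2); rewrite -opprD !qN; lra.
    rewrite qD; congr (_ + _).
    have [a0|a0] := leP 0 a; first exact: (sublinZ _ _ _ sq).
    rewrite -[a]opprK scaleNr qN (sublinZ _ _ _ sq); last by rewrite oppr_ge0 ltW.
    by rewrite !mulNr opprK.
  exists q; split => //; split.
    by move=> v; apply: le_trans (qmu v) _; exact: (@Opq_le mu p0 smu).
  have := qmu (- p0); have := @Opq_N mu p0 smu; rewrite qN; lra.
Qed.


Definition cvx (K : set V) := forall u v (l : R), K u -> K v -> 0 <= l <= 1 ->
  K (l *: u + (1 - l) *: v).
Definition absorb (K : set V) := forall v, exists2 t : R, 0 < t & K (t *: v).

Definition gauge (K : set V) (v : V) : R := inf [set t | 0 < t /\ K (t^-1 *: v)].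

Section GaugeSec.
Variable K : set V.
Hypotheses (cK : cvx K) (K0 : K 0) (aK : absorb K).

Let Sg v := [set t : R | 0 < t /\ K (t^-1 *: v)].
Let Sg_lb v : has_lbound (Sg v).
Proof. by exists 0 => t [t0 _]; apply: ltW. Qed.
Let Sg_ne v : Sg v !=set0.
Proof.
have [t t0 Kt] := aK v; exists t^-1; split; first by rewrite invr_gt0.
by rewrite invrK.
Qed.
Let Sg_inf v : has_inf (Sg v). Proof. by split. Qed.

Lemma gauge_ge0 v : 0 <= gauge K v.
Proof. by apply: le_infP; [exact: Sg_ne|move=> t [t0 _]; apply: ltW]. Qed.

Lemma gauge_le1 v : K v -> gauge K v <= 1.
Proof.
move=> Kv; apply: inf_le_elt => //; first exact: Sg_lb.
by split; [exact: ltr01|rewrite invr1 scale1r].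
Qed.

Lemma cvx_star v l : K v -> 0 <= l <= 1 -> K (l *: v).
Proof.
move=> Kv l01; have := cK _ _ _ Kv K0 l01; by rewrite scaler0 addr0.
Qed.

Lemma gauge_lt1 v : gauge K v < 1 -> K v.
Proof.
move=> g1.
have e0 : 0 < 1 - gauge K v by rewrite subr_gt0.
have [t [t0 Kt] tlt] := @inf_adherent _ (Sg v) _ e0 (Sg_inf v).
have : K (t *: (t^-1 *: v)).
  apply: cvx_star => //; apply/andP; split; first exact: ltW.
  rewrite /gauge -/(Sg v) in tlt; apply: ltW; lra.
by rewrite scalerA mulfV ?gt_eqF // scale1r.
Qed.

Lemma gauge_sublin : sublin (gauge K).
Proof.
split.
- move=> v1 v2; apply: inf_leP; first exact: Sg_lb.
  move=> e e0; have e2 : 0 < e / 2 by rewrite divr_gt0.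
  have [t1 [t10 Kt1] h1] := @inf_adherent _ (Sg v1) _ e2 (Sg_inf v1).
  have [t2 [t20 Kt2] h2] := @inf_adherent _ (Sg v2) _ e2 (Sg_inf v2).
  exists (t1 + t2); last by rewrite /gauge -/(Sg v1) -/(Sg v2); lra.
  split; first by rewrite addr_gt0.
  have l01 : 0 <= t1 / (t1 + t2) <= 1.
    apply/andP; split; first by rewrite divr_ge0 // ltW // addr_gt0.
    by rewrite ler_pdivrMr ?addr_gt0 // mul1r lerDl ltW.
  have := cK _ _ _ Kt1 Kt2 l01; congr K.
  rewrite !scalerA scalerDr; congr (_ *: _ + _ *: _); field.
  + by apply/andP; split; rewrite gt_eqF // ?addr_gt0.
  + by apply/andP; split; rewrite gt_eqF // ?addr_gt0.
- move=> l v l0; apply: inf_leP; first exact: Sg_lb.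
  move=> e e0; have el : 0 < e / l by rewrite divr_gt0.
  have [t [t0 Kt] h] := @inf_adherent _ (Sg v) _ el (Sg_inf v).
  exists (l * t).
    split; first by rewrite mulr_gt0.
    by rewrite scalerA invfM mulrAC mulVf ?gt_eqF // mul1r.
  have : l * t < l * (inf (Sg v) + e / l) by rewrite ltr_pM2l.
  have key : l * (e / l) = e by rewrite mulrCA mulfV ?gt_eqF // mulr1.
  rewrite mulrDr key /gauge -/(Sg v) => h'; lra.
Qed.

End GaugeSec.

Lemma cc_add (l : R) (a b a' b' : V) :
  l *: (a + b) + (1 - l) *: (a' + b') = (l *: a + (1 - l) *: a') + (l *: b + (1 - l) *: b').
Proof. by rewrite !scalerDr addrACA. Qed.

Lemma cc_const (l : R) (a : V) : l *: a + (1 - l) *: a = a.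
Proof. by rewrite -scalerDl addrC subrK scale1r. Qed.

Theorem separation (C U : set V) (p c0 : V) :
  cvx C -> C c0 -> cvx U -> U 0 -> absorb U ->
  (forall c u, C c -> U u -> c + u <> p) ->
  exists f, linf f /\ exists2 d : R, 0 < d &
    (forall c, C c -> f c + d <= f p) /\ (forall u, U u -> f u <= 1).
Proof.
move=> cC Cc0 cU U0 aU hdisj.
pose K := [set w | exists c u, [/\ C c, U u & w = c - c0 + u]].
have cK : cvx K.
  move=> w1 w2 l [c1 [u1 [Cc1 Uu1 ->]]] [c2 [u2 [Cc2 Uu2 ->]]] l01.
  exists (l *: c1 + (1 - l) *: c2), (l *: u1 + (1 - l) *: u2); split.
  - exact: cC.
  - exact: cU.
  - by rewrite !cc_add cc_const.
have K0 : K 0 by exists c0, 0; split => //; rewrite subrr addr0.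
have aK : absorb K.
  move=> v; have [t t0 Ut] := aU v; exists t => //.
  by exists c0, (t *: v); split => //; rewrite subrr add0r.
pose mu := gauge K.
have smu : sublin mu by apply: gauge_sublin.
have [f [lf [fmu fq]]] := @hahn_banach mu (p - c0) smu.
have mu1 : 1 <= mu (p - c0).
  rewrite leNgt; apply/negP => /(@gauge_lt1 K cK K0 aK _) [c [u [Cc Uu]]].
  move=> hp; apply: (hdisj c u Cc Uu).
  by rewrite -(subrK c0 p) hp addrAC subrK.
have key : forall c u, C c -> U u -> f c + f u <= f p.
  move=> c u Cc Uu.
  have : f (c - c0 + u) <= 1.
    apply: le_trans (fmu _) _; apply: gauge_le1; exists c, u; split => //.
  rewrite linfD // linfB //.
  have := linfB f p c0 lf; lra.
have [t t0 Ut] := aU (p - c0).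
exists f; split => //; exists t => //; split.
- move=> c Cc; have := key c _ Cc Ut.
  rewrite linfZ // linfB //.
  have : 1 <= f p - f c0 by rewrite -linfB //; apply: le_trans mu1 fq.
  move=> h1 h2.
  have : t <= t * (f p - f c0) by rewrite ler_peMr // ltW.
  lra.
- move=> u Uu; apply: le_trans (fmu _) _; apply: gauge_le1; exists c0, u; split => //.
  by rewrite subrr add0r.
Qed.

End Generic.

Arguments linf {R V}.
Arguments cvx {R V}.
Arguments absorb {R V}.
Arguments sublin {R V}.
Section XSec.
Variables (R : realType) (X : tvsType R).

Lemma cvx_nbhd (W : set X) : nbhs 0 W -> exists N : set X, [/\ cvx N, nbhs 0 N & N `<=` W].
Proof.
move=> W0.
have [B cB [Bop Bb]] := @locally_convex R X.
have [U [BU U0] UW] := Bb 0 W W0.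
exists U; split => //.
- move=> u v l Uu Uv /andP[l0 l1].
  have := cB U; rewrite inE => /(_ BU) /(_ u v (Itv01 l0 l1)).
  by rewrite !inE => /(_ Uu Uv).
- by apply: open_nbhs_nbhs; split => //; apply: Bop.
Qed.
End XSec.

Section XSec2.
Variables (R : realType) (X : tvsType R).

Lemma nbhs_absorb (N : set X) : nbhs 0 N -> absorb N.
Proof.
move=> N0 v.
have /= := @scale_continuous R X (0, v) N.
rewrite scale0r => /(_ N0) [[B1 B2] /= [B1n B2n] BN].
have [e /= e0 he] := (nbhs_ballP _ _).1 B1n.
exists (e / 2); first by rewrite divr_gt0.
apply: (BN (e / 2, v)); split => //=; last exact: nbhs_singleton.
apply: he; rewrite /ball /= sub0r normrN ger0_norm ?divr_ge0 ?ltW //.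
lra.
Qed.

Lemma nbhs_shift0 (x : X) (V : set X) : nbhs x V -> nbhs 0 [set w | V (x + w)].
Proof.
move=> Vx; have := @nbhsB R X V x (- x) Vx; rewrite addNr.
by apply: filterS => _ [v Vv <-] /=; rewrite addNKr.
Qed.

Lemma nbhs_shift (x : X) (W : set X) : nbhs 0 W -> nbhs x [set y | W (y - x)].
Proof.
move=> W0; have := nbhsT x W0.
by apply: filterS => _ [w Ww <-] /=; rewrite addrC addKr.
Qed.

Lemma nbhs_sub (U : set X) : nbhs 0 U ->
  exists2 W, nbhs 0 W & forall w1 w2, W w1 -> W w2 -> U (w1 - w2).
Proof.
move=> U0; have := @sub_continuous X (0, 0) U; rewrite /= subrr => /(_ U0).
move=> [[A1 A2] /= [A1n A2n] AU].
exists (A1 `&` A2); first exact: filterI.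
by move=> w1 w2 [h1 _] [_ h2]; apply: (AU (w1, w2)).
Qed.

Lemma lin_cont (f : X -> R) (N : set X) : linf f -> nbhs 0 N ->
  (forall w, N w -> f w <= 1) -> continuous f.
Proof.
move=> lf N0 hN x0.
have f0 : f 0 = 0 by have := lf 1 0 0; rewrite scale1r addr0 mul1r => h; lra.
have fZ a u : f (a *: u) = a * f u by rewrite -[a *: u]addr0 lf f0 addr0.
have fD u v : f (u + v) = f u + f v by rewrite -[u]scale1r lf mul1r scale1r.
have fN u : f (- u) = - f u by rewrite -scaleN1r fZ mulN1r.
apply/cvgrPdist_lt => e e0.
have k0 : 0 < e / 2 by rewrite divr_gt0.
pose N' := N `&` [set - w | w in N].
have N'0 : nbhs 0 N' by apply: filterI => //; apply: nbhs0N.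
have k0' : e / 2 != 0 by rewrite gt_eqF.
have := nbhs0Z k0' N'0 => /(nbhsT x0).
apply: filterS => _ [_ [w [Nw [w' Nw' ew]] <-] <-].
rewrite fD fZ opprD addrA subrr add0r normrN normrM ger0_norm ?ltW //.
have : `|f w| <= 1.
  rewrite ler_norml; apply/andP; split; last exact: hN.
  rewrite -ew fN; have := hN _ Nw'; lra.
move=> h; have : e / 2 * `|f w| <= e / 2 * 1 by rewrite ler_pM2l.
lra.
Qed.

End XSec2.

Lemma mono_cover (T : topologicalType) (V : nat -> set T) :
  compact [set: T] -> (forall n, open (V n)) ->
  (forall n m, (n <= m)%N -> V n `<=` V m) -> (forall t, exists n, V n t) ->
  exists n, forall t, V n t.
Proof.
move=> cT Vo Vmono Vcov.
apply: contrapT => hno.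
have hne : forall n, exists t, ~ V n t.
  move=> n; apply: contrapT => h; apply: hno; exists n => t.
  by apply: contrapT => Vt; apply: h; exists t.
pose F := filter_from [set: nat] (fun n => ~` V n).
have FF : Filter F.
  apply: filter_from_filter; first by exists 0%N.
  move=> i j _ _; exists (maxn i j) => //.
  move=> t nt; split => Vt; apply: nt.
  - by apply: (Vmono i) => //; rewrite leq_maxl.
  - by apply: (Vmono j) => //; rewrite leq_maxr.
have PF : ProperFilter F.
  apply: filter_from_proper => n _; have [t ht] := hne n; by exists t.
have [t [_ ct]] := cT F PF (filterT).
have [n Vnt] := Vcov t.
have /set0P := ct (~` V n) (V n) (ex_intro2 _ _ n I (@subset_refl _ _)) (open_nbhs_nbhs (conj (Vo n) Vnt)).
by move=> /negP; apply; apply/eqP; rewrite setICl.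
Qed.
Arguments cvx_nbhd {R X W}.
Arguments nbhs_absorb {R X N}.
Arguments nbhs_shift0 {R X x V}.
Arguments nbhs_shift {R X x W}.
Arguments nbhs_sub {R X U}.
Arguments lin_cont {R X f N}.

Section ESec.
Variables (R : realType) (X : tvsType R).

Lemma scalerO_mul (a : R) (b : R^o) : a *: b = a * b.
Proof. by []. Qed.

Lemma pair_ext (u v : X * R^o) : u.1 = v.1 -> u.2 = v.2 -> u = v.
Proof. by case: u v => ? ? [? ?] /= -> ->. Qed.

Lemma conv_fin (g : X -> \bar R) u v (l a b : R) : proper_fun g -> convex_efun g ->
  (g u <= a%:E)%E -> (g v <= b%:E)%E -> 0 <= l <= 1 ->
  (g (l *: u + (1 - l) *: v)%R <= ((l * a + (1 - l) * b)%R)%:E)%E.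
Proof.
move=> [gN _] cg gu gv l01.
apply: le_trans (cg u v l l01) _.
move: gu gv (gN u) (gN v); case: (g u) => [a'| |]; case: (g v) => [b'| |] //= ha hb _ _.
rewrite -!EFinM -EFinD lee_fin.
have /andP[l0 l1] := l01.
rewrite lee_fin in ha; rewrite lee_fin in hb.
have l1' : (0 <= 1 - l)%R by lra.
have := ler_wpM2l l0 ha; have := ler_wpM2l l1' hb; lra.
Qed.

Lemma cvxI (A B : set X) : cvx A -> cvx B -> cvx (A `&` B).
Proof. by move=> cA cB u v l [Au Bu] [Av Bv] l01; split; [apply: cA|apply: cB]. Qed.

Lemma cvx_star0 (N : set X) v (l : R) : cvx N -> N 0 -> N v -> (0 <= l <= 1)%R -> N (l *: v).
Proof. by move=> cN N0 Nv l01; have := cN _ _ _ Nv N0 l01; rewrite scaler0 addr0. Qed.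


Lemma eps_exist (g : X -> \bar R) (x z : X) (a L eps : R) :
  proper_fun g -> convex_efun g -> lower_semicontinuous g -> g x = a%:E -> 0 < eps ->
  (forall s : R, 0 < s -> ((a + s * L)%:E < g (x + s *: z)%R)%E) ->
  exists psi, eps_subdiff g eps x psi /\ L <= psi z.
Proof.
move=> pg cg lg gx e0 hyp.
have [V0 V0n V0g] : exists2 V0, nbhs x V0 & forall y, V0 y -> (((a - eps / 2)%R)%:E < g y)%E.
  apply: lg; rewrite gx lte_fin; lra.
have [W1 W1n W1s] := nbhs_sub (nbhs_shift0 V0n).
have [N1 [cN1 N1n N1W]] := cvx_nbhd W1n.
have N10 : N1 0 := nbhs_singleton N1n.
have [t t0 Ntz] := nbhs_absorb N1n z.
pose S := Num.min t (eps / (4 * (`|L| + 1))).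
have S0 : 0 < S by rewrite lt_min t0 divr_gt0 // mulr_gt0 // ltr_pwDr.
have St : S <= t by rewrite ge_min lexx.
have SL : S * `|L| <= eps / 4.
  have h : S <= eps / (4 * (`|L| + 1)) by rewrite ge_min lexx orbT.
  have h2 : S * `|L| <= S * (`|L| + 1) by rewrite ler_pM2l //; lra.
  apply: le_trans h2 _.
  have L1 : 0 < `|L| + 1 by rewrite ltr_pwDr.
  have : S * (`|L| + 1) <= eps / (4 * (`|L| + 1)) * (`|L| + 1) by rewrite ler_pM2r.
  have -> : eps / (4 * (`|L| + 1)) * (`|L| + 1) = eps / 4.
    by field; rewrite gt_eqF.
  by [].
have Nsz : forall s, 0 <= s <= S -> N1 (s *: z).
  move=> s /andP[s0 sS].
  have -> : s *: z = (s / t) *: (t *: z) by rewrite scalerA mulfVK // gt_eqF.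
  apply: cvx_star0 => //; apply/andP; split; first by rewrite divr_ge0 // ltW.
  by rewrite ler_pdivrMr // mul1r (le_trans sS).
have [V1 V1n V1g] : exists2 V1, nbhs (x + S *: z) V1 & forall y, V1 y -> (((a + S * L)%R)%:E < g y)%E.
  by apply: lg; apply: hyp.
have [N3 [cN3 N3n N3s]] := cvx_nbhd (nbhs0N (nbhs_shift0 V1n)).
have N30 : N3 0 := nbhs_singleton N3n.
pose N := N1 `&` N3.
have cN : cvx N by apply: cvxI.
have Nn : nbhs 0 N by apply: filterI.
have e4 : 0 < eps / 4 by rewrite divr_gt0.
pose C : set (X * R^o) := [set c | exists y r s,
  [/\ (g y <= r%:E)%E, 0 <= s & c = (y - s *: z, r - s * L)]].
pose U : set (X * R^o) := [set u | N u.1 /\ `|u.2| < eps / 4].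
pose p : X * R^o := (x, a - eps).
have cC : cvx C.
  move=> c1 c2 l [y1 [r1 [s1 [g1 s10 ->]]]] [y2 [r2 [s2 [g2 s20 ->]]]] l01.
  have /andP[l0 l1] := l01.
  exists (l *: y1 + (1 - l) *: y2), (l * r1 + (1 - l) * r2), (l * s1 + (1 - l) * s2).
  split.
  - exact: conv_fin.
  - by rewrite addr_ge0 // mulr_ge0 // subr_ge0.
  - rewrite /=; congr (_, _).
      rewrite cc_add; congr (_ + _).
      by rewrite !scalerN -opprD !scalerA -scalerDl.
    by rewrite /= !scalerO_mul; ring.
have Cc0 : C (x, a).
  by exists x, a, 0; split => //; [rewrite gx|rewrite scale0r subr0 mul0r subr0].
have Un : nbhs (0 : X * R^o) U.
  exists (N, [set r : R^o | `|r| < eps / 4]) => /=.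
    split => //; apply/nbhs_ballP; exists (eps / 4) => //= r.
    by rewrite /ball /= sub0r normrN.
  by move=> [w r] [/= Nw hr]; split.
have cU : cvx U.
  move=> [w1 r1] [w2 r2] l [/= Nw1 hr1] [/= Nw2 hr2] l01; split; first exact: cN.
  have /andP[l0 l1] := l01.
  rewrite /=; move: hr1 hr2; rewrite !ltr_norml => /andP[h1 h1'] /andP[h2 h2'].
  rewrite !scalerO_mul.
  move: (eps / 4) h1 h1' h2 h2' => k h1 h1' h2 h2'.
  have [->|lpos] := eqVneq l 0; first by rewrite mul0r add0r subr0 mul1r h2 h2'.
  have lp : 0 < l by rewrite lt_neqAle eq_sym lpos.
  have A1 : 0 < l * (r1 + k) by rewrite mulr_gt0 //; lra.
  have A2 : 0 < l * (k - r1) by rewrite mulr_gt0 //; lra.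
  have B1 : 0 <= (1 - l) * (r2 + k) by rewrite mulr_ge0 //; lra.
  have B2 : 0 <= (1 - l) * (k - r2) by rewrite mulr_ge0 //; lra.
  apply/andP; split; lra.
have U0 : U 0 by split; [exact: nbhs_singleton|rewrite normr0].
have aU : absorb U := @nbhs_absorb R (X * R^o)%type _ Un.
have hdisj : forall c u, C c -> U u -> c + u <> p.
  move=> _ [w rho] [y [r [s [gyr s0 ->]]]] [/= [N1w N3w] hrho] [h1 h2].
  have hy : y = x + (s *: z - w) by rewrite -h1 addrACA subrK subrr addr0.
  have hr : r = a - eps + s * L - rho by move: h2; lra.
  move: hrho; rewrite ltr_norml => /andP[hrho1 hrho2].
  have [sS|Ss] := leP s S.
  - have := W1s _ _ (N1W _ (Nsz s (introT andP (conj s0 sS)))) (N1W _ N1w).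
    move=> /V0g; rewrite -hy => hg.
    have : ((a - eps / 2)%:E < r%:E)%E by apply: lt_le_trans hg gyr.
    rewrite lte_fin => har.
    have i1 : s * L <= s * `|L| by rewrite ler_wpM2l // ler_norm.
    have i2 : s * `|L| <= S * `|L| by rewrite ler_wpM2r.
    clear hg gyr gx; lra.
  - have sp : 0 < s by apply: lt_trans Ss.
    pose lam := S / s.
    have lam0 : 0 < lam by rewrite divr_gt0.
    have lam01 : 0 <= lam <= 1.
      by apply/andP; split; [exact: ltW|rewrite ler_pdivrMr // mul1r ltW].
    have lams : lam * s = S by rewrite /lam mulfVK // gt_eqF.
    have [w' V1w' ew'] := N3s _ (cvx_star0 _ _ _ cN3 N30 N3w lam01).
    have hP : lam *: y + (1 - lam) *: x = x + S *: z + w'.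
      rewrite hy scalerDr addrAC cc_const scalerBr scalerA lams -addrA; congr (_ + (_ + _)).
      by rewrite -ew' opprK.
    have := V1g _ V1w'; rewrite -hP => hg1.
    have gxle : (g x <= a%:E)%E by rewrite gx.
    have hg2 := conv_fin _ _ _ _ _ _ pg cg gyr gxle lam01.
    have : (((a + S * L)%R)%:E < ((lam * r + (1 - lam) * a)%R)%:E)%E.
      by apply: lt_le_trans hg1 hg2.
    rewrite lte_fin => hlt.
    have heq : lam * r + (1 - lam) * a = a + (lam * s) * L + lam * (- eps - rho).
      by rewrite hr; ring.
    rewrite lams in heq.
    have : 0 < lam * (eps + rho) by rewrite mulr_gt0 //; lra.
    clear hg1 hg2 gyr gx gxle; lra.
have [f [lf [d d0 [hC hU]]]] := @separation R (X * R^o)%type C U p (x, a) cC Cc0 cU U0 aU hdisj.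
pose psi0 w := f (w, 0).
pose beta := f (0, 1).
have fpair w r : f (w, r) = psi0 w + r * beta.
  have -> : ((w, r) : X * R^o) = r *: ((0, 1) : X * R^o) + (w, 0).
    apply: pair_ext => /=; first by rewrite scaler0 add0r.
    by rewrite scalerO_mul mulr1 addr0.
  by rewrite lf addrC.
have lpsi0 : linf psi0.
  move=> c u v; rewrite /psi0.
  have -> : ((c *: u + v, 0) : X * R^o) = c *: ((u, 0) : X * R^o) + (v, 0).
    by apply: pair_ext => //=; rewrite scalerO_mul mulr0 addr0.
  by rewrite lf.
have bneg : beta < 0.
  have := hC _ Cc0; rewrite /p !fpair => h.
  rewrite ltNge; apply/negP => hb; have := mulr_ge0 (ltW e0) hb; lra.
pose k := - beta.
have k0 : 0 < k by rewrite oppr_gt0.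
have bk : beta = - k by rewrite opprK.
pose psi w := psi0 w / k.
have lpsi : linf psi by move=> c u v; rewrite /psi lpsi0 mulrDl mulrA.
have psiD u v : psi (u - v) = psi u - psi v.
  by rewrite -scaleN1r addrC lpsi mulN1r addrC.
exists psi; split; last first.
  rewrite /psi ler_pdivlMr //; rewrite leNgt; apply/negP => hlt.
  pose del := L * k - psi0 z.
  have del0 : 0 < del by rewrite subr_gt0.
  pose s := eps * k / del.
  have s0 : 0 <= s by apply: divr_ge0; [apply: mulr_ge0|]; apply: ltW.
  have Cs : C (x - s *: z, a - s * L).
    exists x, a, s; split => //; by rewrite gx.
  have := hC _ Cs; rewrite /p !fpair.
  have -> : psi0 (x - s *: z) = psi0 x - s * psi0 z.
    by rewrite -scaleNr addrC lpsi0 mulNr addrC.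
  have sdel : s * del = eps * k by rewrite /s mulfVK // gt_eqF.
  rewrite bk /del in sdel * => h.
  clear gx; lra.
split; last first.
  exists a; split => // y.
  have [gN _] := pg.
  move: (gN y); case Egy : (g y) => [r'| |] // _; last exact: leey.
  have Cy : C (y, r').
    by exists y, r', 0; split => //; [rewrite Egy|rewrite scale0r subr0 mul0r subr0].
  have := hC _ Cy; rewrite /p !fpair bk => h.
  rewrite lee_fin psiD /psi.
  have : (psi0 y - psi0 x) <= k * (r' - a + eps) - d by lra.
  move=> h2.
  have : psi0 y / k - psi0 x / k <= r' - a + eps.
    rewrite -mulrBl ler_pdivrMr // mulrC; lra.
  lra.
split; first exact: lpsi.
have k0' : k != 0 by rewrite gt_eqF.
apply: (lin_cont lpsi (@nbhs0Z R X N k k0' Nn)).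
move=> _ [w Nw <-]; rewrite /psi (@linfZ R X psi0 k w lpsi0) mulrAC mulfV // mul1r.
by apply: hU; split => //=; rewrite normr0.
Qed.

End ESec.

Section WSec.
Variables (R : realType) (X : tvsType R).

Lemma conv_abs (r1 r2 l k : R) : `|r1| < k -> `|r2| < k -> 0 <= l <= 1 ->
  `|l * r1 + (1 - l) * r2| < k.
Proof.
rewrite !ltr_norml => /andP[h1 h1'] /andP[h2 h2'] /andP[l0 l1].
have [->|lpos] := eqVneq l 0; first by rewrite mul0r add0r subr0 mul1r h2 h2'.
have lp : 0 < l by rewrite lt_neqAle eq_sym lpos.
have A1 : 0 < l * (r1 + k) by rewrite mulr_gt0 //; lra.
have A2 : 0 < l * (k - r1) by rewrite mulr_gt0 //; lra.
have B1 : 0 <= (1 - l) * (r2 + k) by rewrite mulr_ge0 //; lra.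
have B2 : 0 <= (1 - l) * (k - r2) by rewrite mulr_ge0 //; lra.
apply/andP; split; lra.
Qed.

Lemma wstar_sep (D : set (X -> R)) (phi psi1 : X -> R) :
  D `<=` dual_elem -> wstar_closed D -> dual_convex D -> D psi1 ->
  dual_elem phi -> ~ D phi ->
  exists z, exists2 del : R, 0 < del & forall psi, D psi -> psi z + del <= phi z.
Proof.
move=> Dd Dc Dcv Dpsi1 dphi nDphi.
have [s [e [e0 hse]]] := Dc phi dphi nDphi.
pose n := size s.
pose ev (psi : X -> R) : 'rV[R]_n := \row_(i < n) psi (nth 0 s i).
pose C := [set v : 'rV[R]_n | exists2 psi, D psi & v = ev psi].
pose U := [set v : 'rV[R]_n | forall i, `|v 0 i| < e].
have cC : cvx C.
  move=> _ _ l [p1 Dp1 ->] [p2 Dp2 ->] l01.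
  exists (fun w => l * p1 w + (1 - l) * p2 w); first exact: Dcv.
  by apply/rowP => i; rewrite !mxE.
have Cc0 : C (ev psi1) by exists psi1.
have cU : cvx U.
  by move=> u v l Uu Uv l01 i; rewrite !mxE; apply: conv_abs.
have U0 : U 0 by move=> i; rewrite mxE normr0.
have aU : absorb U.
  move=> v.
  pose M := \sum_(j < n) `|v 0 j|.
  have M0 : 0 <= M by apply: sumr_ge0 => j _.
  exists (e / (M + 1)); first by rewrite divr_gt0 // ltr_pwDr.
  move=> i; rewrite mxE normrM ger0_norm; last by rewrite divr_ge0 ?ltW // ltr_pwDr.
  have vi : `|v 0 i| <= M by rewrite /M (bigD1 i) //= lerDl sumr_ge0.
  rewrite mulrAC ltr_pdivrMr ?ltr_pwDr // ltr_pM2l //; lra.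
have hdisj : forall c u, C c -> U u -> c + u <> ev phi.
  move=> _ u [psi Dpsi ->] Uu hpu; apply: (hse psi (Dd _ Dpsi)) => //.
  move=> z zs.
  have ilt : (index z s < n)%N by rewrite index_mem.
  have := Uu (Ordinal ilt).
  have := congr1 (fun v : 'rV[R]_n => v 0 (Ordinal ilt)) hpu.
  rewrite /= !mxE /= nth_index // => <-.
  by rewrite opprD addrA subrr sub0r normrN.
have [f [lf [d d0 [hC _]]]] := @separation R 'rV[R]_n C U (ev phi) (ev psi1) cC Cc0 cU U0 aU hdisj.
exists (\sum_(i < n) f 'e_i *: nth 0 s i), d => // psi Dpsi.
have key : forall p, dual_elem p -> p (\sum_(i < n) f 'e_i *: nth 0 s i) = f (ev p).
  move=> p [lp _].
  rewrite (@linf_sum R X p n) // [ev p]row_sum_delta (@linf_sum R _ f n) //.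
  by apply: eq_bigr => i _; rewrite mxE mulrC.
rewrite !key //; last exact: Dd.
by apply: hC; exists psi.
Qed.

End WSec.

Section MSec.
Variables (R : realType) (X : tvsType R).

Lemma dual_comb (al be : R) (p1 p2 : X -> R) : dual_elem p1 -> dual_elem p2 ->
  dual_elem (fun z => al * p1 z + be * p2 z).
Proof.
move=> [l1 c1] [l2 c2]; split.
  by move=> a u v; rewrite l1 l2; ring.
move=> z.
have h1 := continuousM (@cst_continuous X R al z) (c1 z).
have h2 := continuousM (@cst_continuous X R be z) (c2 z).
exact: (continuousD h1 h2).
Qed.

Lemma mono_s (g : X -> \bar R) (x z : X) (M B s s' : R) :
  proper_fun g -> convex_efun g -> (g x <= M%:E)%E -> 0 < s' -> s' <= s ->
  (g (x + s *: z)%R < B%:E)%E -> (g (x + s' *: z)%R < ((M + s' / s * (B - M))%R)%:E)%E.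
Proof.
move=> pg cg gxM s'0 s's hB.
have s0 : 0 < s by apply: lt_le_trans s's.
pose lam := s' / s.
have lam0 : 0 < lam by rewrite divr_gt0.
have lam01 : 0 <= lam <= 1 by apply/andP; split; [exact: ltW|rewrite ler_pdivrMr // mul1r].
have lams : lam * s = s' by rewrite /lam mulfVK // gt_eqF.
have [gN _] := pg.
move: hB (gN (x + s *: z)); case Eb : (g (x + s *: z)%R) => [b| |] // hB _.
have gb : (g (x + s *: z)%R <= b%:E)%E by rewrite Eb.
have := @conv_fin R X _ _ _ _ _ _ pg cg gb gxM lam01.
have -> : lam *: (x + s *: z) + (1 - lam) *: x = x + s' *: z.
  by rewrite scalerDr addrAC cc_const scalerA lams.
move=> h; apply: le_lt_trans h _; rewrite lte_fin.
rewrite lte_fin in hB.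
have : lam * b < lam * B by rewrite ltr_pM2l.
rewrite -/lam; lra.
Qed.

Lemma fin_of (u : \bar R) : (-oo < u)%E -> (u < +oo)%E -> u = (fine u)%:E.
Proof. by case: u. Qed.

End MSec.

Theorem corollary2 (R : realType) (X : tvsType R) (T : topologicalType)
  (ft : T -> X -> \bar R) (x : X) :
  hausdorff_space X ->
  (exists t0 : T, True) ->
  (forall t, proper_fun (ft t)) ->
  (forall t, convex_efun (ft t)) ->
  (forall t, lower_semicontinuous (ft t)) ->
  (* (SH) *)
  hausdorff_space T -> compact [set: T] ->
  (forall z : X, upper_semicontinuous (fun t => ft t z)) ->
  edom (sup_fun ft) x ->
  (-oo < ereal_inf (range (fun t => ft t x)))%E ->
  forall eps : R, 0 < eps ->
    normal_cone (edom (sup_fun ft)) x =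
    rec_cone (wstar_clco (\bigcup_(t in [set: T]) eps_subdiff (ft t) eps x)).
Proof.
move=> _ [t0 _] prop cvxf lscf _ cT usc xdom hinf eps e0.
set A := \bigcup_(t in [set: T]) eps_subdiff (ft t) eps x.
set Cl := wstar_clco A.
have ftsup : forall t y, (ft t y <= sup_fun ft y)%E.
  by move=> t y; apply: ereal_sup_ubound; exists t.
have ftinf : forall t, (ereal_inf (range (fun t => ft t x)) <= ft t x)%E.
  by move=> t; apply: ereal_inf_lbound; exists t.
pose I := ereal_inf (range (fun t => ft t x)).
have Ifin : I = (fine I)%:E.
  apply: fin_of => //; apply: le_lt_trans (ftinf t0) _.
  exact: le_lt_trans (ftsup t0 x) xdom.
pose m := fine I.
have Sfin : sup_fun ft x = (fine (sup_fun ft x))%:E.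
  apply: fin_of => //; apply: lt_le_trans (ftsup t0 x).
  exact: lt_le_trans hinf (ftinf t0).
pose M := fine (sup_fun ft x).
have ftx t : exists a, [/\ ft t x = a%:E, m <= a & a <= M].
  have h1 := ftinf t; have h2 := ftsup t x.
  have fin : ft t x = (fine (ft t x))%:E.
    by apply: fin_of; [exact: lt_le_trans hinf h1|exact: le_lt_trans h2 xdom].
  exists (fine (ft t x)); split => //.
  - by rewrite -lee_fin -fin /m -Ifin.
  - by rewrite -lee_fin -fin /M -Sfin.
have [a0 [Ea0 _ _]] := ftx t0.
have [psi1 [Dpsi1 _]] : exists psi, eps_subdiff (ft t0) eps x psi /\ -1 <= psi 0.
  apply: (@eps_exist R X (ft t0) x 0 a0 (-1) eps (prop t0) (cvxf t0) (lscf t0) Ea0 e0).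
  by move=> s s0; rewrite scaler0 addr0 Ea0 lte_fin; lra.
have Apsi1 : A psi1 by exists t0.
have AsubCl : A `<=` Cl.
  move=> p Ap; split; last by move=> C _ _ _ hAC; exact: hAC.
  by case: Ap => t _ [].
apply/seteqP; split.
- move=> d [dd hd]; split => // c [dc hc] l l0.
  have dcl : dual_elem (fun z => c z + l * d z).
    have := @dual_comb R X 1 l _ _ dc dd.
    by rewrite (_ : (fun z => 1 * c z + l * d z) = (fun z => c z + l * d z)) //;
      apply/funext => w; rewrite mul1r.
  split => // D Dd Dc Dcv AD.
  apply: contrapT => nD.
  have [z [del del0 hz]] := @wstar_sep R X D _ psi1 Dd Dc Dcv (AD _ Apsi1) dcl nD.
  have cD : D c := hc D Dd Dc Dcv AD.
  have hcz := hz c cD.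
  have dz : 0 < d z.
    rewrite ltNge; apply/negP => dz0.
    have : l * d z <= 0 by rewrite mulr_ge0_le0.
    lra.
  pose K := c z + l * d z - del.
  have AK : forall p, A p -> p z <= K.
    by move=> p Ap; have := hz p (AD _ Ap); rewrite /K; lra.
  pose L' := K + 1.
  have st : forall t, exists2 s, 0 < s & (ft t (x + s *: z)%R <= ((M + s * L')%R)%:E)%E.
    move=> t; have [a [Ea ma aM]] := ftx t.
    apply: contrapT => hno.
    have hyp : forall s, 0 < s -> ((a + s * L')%:E < ft t (x + s *: z)%R)%E.
      move=> s s0; rewrite ltNge; apply/negP => hle; apply: hno; exists s => //.
      by apply: le_trans hle _; rewrite lee_fin; lra.
    have [p [pA pz]] := @eps_exist R X (ft t) x z a L' eps (prop t) (cvxf t) (lscf t) Ea e0 hyp.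
    have : A p by exists t.
    move=> /AK; rewrite /L' in pz; lra.
  pose Vr s := [set t | (ft t (x + s *: z)%R < ((M + s * L' + 1)%R)%:E)%E].
  have Vmono : forall s s', 0 < s' -> s' <= s -> Vr s `<=` Vr s'.
    move=> s s' s'0 s's t Vt.
    have s0 : 0 < s by apply: lt_le_trans s's.
    have [a [Ea _ aM]] := ftx t.
    have gxM : (ft t x <= M%:E)%E by rewrite Ea lee_fin.
    have := @mono_s R X (ft t) x z M _ s s' (prop t) (cvxf t) gxM s'0 s's Vt.
    move=> h; apply: lt_le_trans h _; rewrite lee_fin.
    have -> : M + s' / s * (M + s * L' + 1 - M) = M + s' * L' + s' / s.
      by field; rewrite gt_eqF.
    have : s' / s <= 1 by rewrite ler_pdivrMr // mul1r.
    lra.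
  pose V n := Vr (n.+1%:R^-1).
  have Vpos n : 0 < n.+1%:R^-1 :> R by rewrite invr_gt0.
  have Vop n : open (V n).
    rewrite openE => t Vt; rewrite /interior.
    have [W Wn hW] := usc (x + n.+1%:R^-1 *: z) t _ Vt.
    by apply: filterS Wn => t' /hW.
  have Vmn : forall n k, (n <= k)%N -> V n `<=` V k.
    move=> n k nk; apply: Vmono => //.
    by rewrite lef_pV2 ?posrE ?ltr0n // ler_nat ltnS.
  have Vcov : forall t, exists n, V n t.
    move=> t; have [s s0 hs] := st t.
    exists (Num.Def.truncn (s^-1)).
    apply: (Vmono s) => //.
      have := truncnS_gt (s^-1); set N := (Num.Def.truncn s^-1).+1%:R.
      move=> hN; have N0 : 0 < N by apply: lt_trans hN; rewrite invr_gt0.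
      rewrite -div1r ler_pdivrMr //.
      rewrite -div1r ltr_pdivrMr // in hN.
      by rewrite mulrC ltW.
    rewrite /Vr /=; apply: le_lt_trans hs _; rewrite lte_fin; lra.
  have [N VN] := @mono_cover T V cT Vop Vmn Vcov.
  pose sN : R := N.+1%:R^-1.
  have sN0 : 0 < sN := Vpos N.
  have domy : edom (sup_fun ft) (x + sN *: z).
    rewrite /edom /=.
    apply: (@le_lt_trans _ _ ((M + sN * L' + 1)%R)%:E); last exact: ltry.
    by apply: ge_ereal_sup => _ [t _ <-]; apply: ltW; apply: VN.
  have := hd _ domy.
  rewrite addrAC subrr add0r (@linfZ R X d sN z dd.1) => h.
  have : 0 < sN * d z by rewrite mulr_gt0.
  lra.
- move=> d [dd hrec]; split => // y domy.
  have [gN _] := prop t0.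
  have fy : sup_fun ft y = (fine (sup_fun ft y))%:E.
    apply: fin_of => //; apply: lt_le_trans (ftsup t0 y).
    by rewrite ltNye gN.
  pose F := fine (sup_fun ft y).
  pose K := F - m + eps.
  pose Hy := [set p | dual_elem p /\ p (y - x) <= K].
  have Hyd : Hy `<=` dual_elem by move=> p [].
  have Hyc : wstar_closed Hy.
    move=> p dp nHy.
    have pK : K < p (y - x) by rewrite ltNge; apply/negP => h; apply: nHy.
    exists [:: y - x], (p (y - x) - K); split; first by rewrite subr_gt0.
    move=> q dq hq [_ hqK].
    have := hq (y - x) (mem_head _ _); rewrite ltr_norml => /andP[h1 _].
    clear -h1 pK hqK; lra.
  have Hycv : dual_convex Hy.
    move=> p1 p2 l [d1 h1] [d2 h2] /andP[l0 l1]; split; first exact: dual_comb.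
    have i1 : l * p1 (y - x) <= l * K by rewrite ler_wpM2l.
    have i2 : (1 - l) * p2 (y - x) <= (1 - l) * K by rewrite ler_wpM2l // subr_ge0.
    clear -i1 i2; lra.
  have AHy : A `<=` Hy.
    move=> p [t _ [dp [r [Er hr]]]]; split => //.
    have := le_trans (hr y) (ftsup t y); rewrite fy lee_fin => h.
    have [a [Ea ma _]] := ftx t.
    move: Er; rewrite Ea => -[ear]; rewrite ear in ma.
    rewrite /K /F; clear -h ma; lra.
  have key : forall l, 0 <= l -> psi1 (y - x) + l * d (y - x) <= K.
    move=> l l0.
    have := hrec psi1 (AsubCl _ Apsi1) l l0.
    by move=> [_ /(_ Hy Hyd Hyc Hycv AHy)] [].
  rewrite leNgt; apply/negP => dpos.
  have k0 := key 0 (lexx 0); rewrite mul0r addr0 in k0.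
  pose l := (K - psi1 (y - x) + 1) / d (y - x).
  have l0 : 0 <= l by rewrite divr_ge0 ?ltW //; clear -k0; lra.
  have := key l l0.
  rewrite /l mulfVK ?gt_eqF //; clear; lra.
Qed.
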